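(* There exists a rewb $\alpha$ such that $L(\alpha)\ne L(\beta)$ for every rewb $\beta$ without a captured reference.
   Context: Fix a finite alphabet $\Sigma$. For $k\ge1$, $[k]=\{1,\dots,k\}$, $B_k=\{[_i,\,]_i:i\in[k]\}$ fresh brackets; $g$ fixes letters of $\Sigma$ and erases brackets. Rewbs: $\mathrm{REWB}_k$ and $\mathrm{var}(\alpha)$ defined inductively: $a\in\Sigma\cup\{\varepsilon\}$ ($\mathrm{var}=\emptyset$); $\backslash i$, $i\in[k]$ ($\mathrm{var}=\{i\}$); $\alpha_0\alpha_1$, $\alpha_0+\alpha_1$ (union); $\alpha_0^\ast$; $(_j\alpha_0)_j$ for $j\in[k]\setminus\mathrm{var}(\alpha_0)$ (var gains $j$); labels may repeat. $\mathcal{R}_k(\alpha)$: the regular language over $\Sigma\uplus B_k\uplus[k]$ from reading $\alpha$ as a regular expression with $\backslash i$ as letter $i$ and $(_i\alpha_0)_i$ as $[_i\mathcal{R}_k(\alpha_0)]_i$. Dereferencing $\mathcal{D}_k$: repeatedly take the leftmost number $i$; if no $[_i$ lies to its left delete it; else take the nearest $[_i$ to its left; if no $]_i$ lies between them the result is undefined; else replace $i$ by $g(u)$, $u$ the string strictly between that $[_i$ and the first subsequent $]_i$; finally delete all brackets. $L(\alpha)=\mathcal{D}_k(\mathcal{R}_k(\alpha))$. A rewb is without a captured reference if no subexpression $\backslash i$ occurs inside a subexpression of the form $(_j\beta)_j$. *)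

(* Defs.v *)
From mathcomp Require Import all_boot.
Set Implicit Arguments. Unset Strict Implicit. Unset Printing Implicit Defensive.

Section Rewb.
Variable Sigma : finType.

(* Syntax of rewbs (labels are natural numbers; membership in REWB_k is [rewb_k]). *)
Inductive rewb : Type :=
| RChr of Sigma
| REps
| RRef of nat
| RCat of rewb & rewb
| RAlt of rewb & rewb
| RStar of rewb
| RCap of nat & rewb.

Fixpoint var (a : rewb) : seq nat :=
  match a with
  | RChr _ | REps => [::]
  | RRef i => [:: i]
  | RCat a0 a1 | RAlt a0 a1 => var a0 ++ var a1
  | RStar a0 => var a0
  | RCap j a0 => j :: var a0
  end.

Fixpoint rewb_k (k : nat) (a : rewb) : bool :=
  match a with
  | RChr _ | REps => true
  | RRef i => (1 <= i <= k)
  | RCat a0 a1 | RAlt a0 a1 => rewb_k k a0 && rewb_k k a1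
  | RStar a0 => rewb_k k a0
  | RCap j a0 => [&& 1 <= j <= k, j \notin var a0 & rewb_k k a0]
  end.

Inductive sym : Type :=
| SLet of Sigma
| SOpen of nat
| SClose of nat
| SNum of nat.

(* R(alpha): the regular language over the extended alphabet. *)
Inductive InR : rewb -> seq sym -> Prop :=
| InR_chr a : InR (RChr a) [:: SLet a]
| InR_eps : InR REps [::]
| InR_ref i : InR (RRef i) [:: SNum i]
| InR_cat a0 a1 u v : InR a0 u -> InR a1 v -> InR (RCat a0 a1) (u ++ v)
| InR_altl a0 a1 u : InR a0 u -> InR (RAlt a0 a1) u
| InR_altr a0 a1 u : InR a1 u -> InR (RAlt a0 a1) u
| InR_star0 a0 : InR (RStar a0) [::]
| InR_starS a0 u v : InR a0 u -> InR (RStar a0) v -> InR (RStar a0) (u ++ v)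
| InR_cap j a0 u : InR a0 u -> InR (RCap j a0) (SOpen j :: rcons u (SClose j)).

(* g: keep letters, erase brackets (and numbers; only applied where none occur). *)
Fixpoint gmap (s : seq sym) : seq Sigma :=
  match s with
  | [::] => [::]
  | SLet a :: s' => a :: gmap s'
  | _ :: s' => gmap s'
  end.

(* [find_open i r acc] with r = rev pre: the part of pre strictly after the
   nearest (rightmost) [_i, or None if there is no [_i in pre. *)
Fixpoint find_open (i : nat) (r acc : seq sym) : option (seq sym) :=
  match r with
  | [::] => None
  | SOpen j :: r' => if j == i then Some acc else find_open i r' (SOpen j :: acc)
  | x :: r' => find_open i r' (x :: acc)
  end.

Fixpoint upto_close (i : nat) (s : seq sym) : option (seq sym) :=
  match s with
  | [::] => None
  | SClose j :: s' => if j == i then Some [::]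
                      else omap (cons (SClose j)) (upto_close i s')
  | x :: s' => omap (cons x) (upto_close i s')
  end.

(* Dereferencing, processing numbers leftmost first; [pre] is the already
   processed prefix (no numbers left in it). *)
Fixpoint deref_aux (pre w : seq sym) : option (seq Sigma) :=
  match w with
  | [::] => Some (gmap pre)
  | SNum i :: w' =>
      match find_open i (rev pre) [::] with
      | None => deref_aux pre w'
      | Some after =>
          match upto_close i after with
          | None => None
          | Some u => deref_aux (pre ++ map SLet (gmap u)) w'
          end
      end
  | x :: w' => deref_aux (rcons pre x) w'
  end.

Definition deref (w : seq sym) : option (seq Sigma) := deref_aux [::] w.

(* L(alpha) = D(R(alpha)) (undefined results discarded) *)
Definition lang (a : rewb) (w : seq Sigma) : Prop :=
  exists v, InR a v /\ deref v = Some w.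

Fixpoint has_ref (a : rewb) : bool :=
  match a with
  | RChr _ | REps => false
  | RRef _ => true
  | RCat a0 a1 | RAlt a0 a1 => has_ref a0 || has_ref a1
  | RStar a0 => has_ref a0
  | RCap _ a0 => has_ref a0
  end.

Fixpoint no_captured_ref (a : rewb) : bool :=
  match a with
  | RChr _ | REps | RRef _ => true
  | RCat a0 a1 | RAlt a0 a1 => no_captured_ref a0 && no_captured_ref a1
  | RStar a0 => no_captured_ref a0
  | RCap _ a0 => ~~ has_ref a0
  end.

End Rewb.

(* Main.v *)
Require Import Defs.
From mathcomp Require Import all_boot zify.
Set Implicit Arguments. Unset Strict Implicit. Unset Printing Implicit Defensive.

Definition isO {S : finType} (i : nat) (x : sym S) : bool :=
  match x with SOpen j => j == i | _ => false end.
Definition isC {S : finType} (i : nat) (x : sym S) : bool :=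
  match x with SClose j => j == i | _ => false end.
Definition isN {S : finType} (x : sym S) : bool :=
  match x with SNum _ => true | _ => false end.

Lemma find_open_acc {S : finType} i (r acc : seq (sym S)) :
  find_open i r acc = omap (fun a => a ++ acc) (find_open i r [::]).
Proof.
elim: r acc => [|x r IH] acc //=.
have H: forall y, find_open i r (y :: acc) = omap (fun a => a ++ acc) (find_open i r [:: y]).
  move=> y; rewrite (IH (y :: acc)) (IH [:: y]).
  by case: (find_open i r [::]) => //= a; rewrite -catA.
case: x => [a|j|j|j] /=; rewrite ?H //.
by case: eqP.
Qed.

Lemma find_open_cat {S : finType} i (x r acc : seq (sym S)) :
  find_open i (x ++ r) acc =
  match find_open i x acc with Some a => Some a | None => find_open i r (rev x ++ acc) end.
Proof.
elim: x acc => [|y x IH] acc //=.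
case: y => [a|j|j|j] /=; rewrite ?IH ?rev_cons ?cat_rcons //.
by case: (j == i).
Qed.

Lemma find_open_none {S : finType} i (r acc : seq (sym S)) :
  ~~ has (isO i) r -> find_open i r acc = None.
Proof.
elim: r acc => [|x r IH] acc //=.
case: x => [a|j|j|j] /=; rewrite ?negb_or; try (by move=> h; apply: IH).
by case/andP => /negbTE -> h; apply: IH.
Qed.

Definition fo {S : finType} i (s : seq (sym S)) := find_open i (rev s) [::].

Lemma fo_cat {S : finType} i (s1 s2 : seq (sym S)) :
  fo i (s1 ++ s2) = match fo i s2 with Some a => Some a | None => omap (fun a => a ++ s2) (fo i s1) end.
Proof.
rewrite /fo rev_cat find_open_cat.
case: (find_open i (rev s2) [::]) => // ; by rewrite revK cats0 find_open_acc.
Qed.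

Lemma fo_none {S : finType} i (s : seq (sym S)) : ~~ has (isO i) s -> fo i s = None.
Proof. move=> h; rewrite /fo find_open_none // has_rev //. Qed.

Lemma fo_open {S : finType} i (pre t : seq (sym S)) :
  ~~ has (isO i) t -> fo i (pre ++ SOpen _ i :: t) = Some t.
Proof.
move=> h; rewrite -cat_rcons -cats1 fo_cat fo_none // fo_cat /fo /= eqxx //.
Qed.

Lemma uc_close {S : finType} i (s t : seq (sym S)) :
  ~~ has (isC i) s -> upto_close i (s ++ SClose _ i :: t) = Some s.
Proof.
elim: s => [|x s IH] /=; first by rewrite eqxx.
case: x => [a|j|j|j] /=; rewrite ?negb_or; try by move=> h; rewrite IH.
by case/andP=> /negbTE -> h; rewrite IH.
Qed.

Lemma uc_cat {S : finType} i (a b u : seq (sym S)) :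
  upto_close i a = Some u -> upto_close i (a ++ b) = Some u.
Proof.
elim: a u => [|x a IH] u //=.
case: x => [c|j|j|j] /=; try by case E: (upto_close i a) => [v|] //= [<-]; rewrite (IH v).
case: eqP => // _; case E: (upto_close i a) => [v|] //= [<-]; by rewrite (IH v).
Qed.

Lemma gmap_cat {S : finType} (s1 s2 : seq (sym S)) : gmap (s1 ++ s2) = gmap s1 ++ gmap s2.
Proof. elim: s1 => [|x s IH] //=; case: x => [a|j|j|j] /=; by rewrite IH. Qed.

Lemma gmap_let {S : finType} (w : seq S) : gmap (map (@SLet S) w) = w.
Proof. by elim: w => //= a w ->. Qed.

Lemma has_let {S : finType} (p : pred (sym S)) (w : seq S) :
  (forall a, ~~ p (SLet a)) -> ~~ has p (map (@SLet S) w).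
Proof. move=> h; elim: w => //= a w IH; by rewrite negb_or h IH. Qed.

Lemma deref_ref {S : finType} i (pre w a u : seq (sym S)) :
  fo i pre = Some a -> upto_close i a = Some u ->
  deref_aux pre (SNum _ i :: w) = deref_aux (pre ++ map (@SLet S) (gmap u)) w.
Proof. rewrite /fo => /= -> ->. done. Qed.

Lemma deref_ref0 {S : finType} i (pre w : seq (sym S)) :
  fo i pre = None -> deref_aux pre (SNum _ i :: w) = deref_aux pre w.
Proof. rewrite /fo => /= -> . done. Qed.

Lemma deref_noN {S : finType} (pre u w : seq (sym S)) :
  ~~ has isN u -> deref_aux pre (u ++ w) = deref_aux (pre ++ u) w.
Proof.
elim: u pre => [|x u IH] pre /=; first by rewrite cats0.
case: x => [a|j|j|j] //= h; by rewrite IH // cat_rcons.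
Qed.


Inductive tree (S : finType) : Type :=
| TC of S | TE | TR of nat | TCat of tree S & tree S | TAl of tree S | TAr of tree S
| TSN | TSC of tree S & tree S | TCap of nat & tree S.

Fixpoint word {S : finType} (t : tree S) : seq (sym S) :=
  match t with
  | TC a => [:: SLet a]
  | TE => [::]
  | TR i => [:: SNum _ i]
  | TCat t u => word t ++ word u
  | TSC t u => word t ++ word u
  | TAl t => word t
  | TAr t => word t
  | TSN => [::]
  | TCap j t => SOpen _ j :: rcons (word t) (SClose _ j)
  end.

Fixpoint lit {S : finType} (t : tree S) : nat :=
  match t with
  | TC _ => 1
  | TCat t u => lit t + lit u
  | TSC t u => lit t + lit u
  | TAl t => lit t
  | TAr t => lit t
  | TCap _ t => lit t
  | _ => 0
  end.

Fixpoint capv {S : finType} (t : tree S) (i : nat) : option nat :=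
  match t with
  | TCat t u => match capv u i with Some c => Some c | None => capv t i end
  | TSC t u => match capv u i with Some c => Some c | None => capv t i end
  | TAl t => capv t i
  | TAr t => capv t i
  | TCap j t => if i == j then Some (lit t) else capv t i
  | _ => None
  end.

Definition env {S : finType} (t : tree S) (e : nat -> nat) (i : nat) : nat :=
  odflt (e i) (capv t i).

Fixpoint out {S : finType} (t : tree S) (e : nat -> nat) : nat :=
  match t with
  | TC _ => 1
  | TR i => e i
  | TCat t u => out t e + out u (env t e)
  | TSC t u => out t e + out u (env t e)
  | TAl t => out t e
  | TAr t => out t e
  | TCap _ t => out t e
  | _ => 0
  end.

Inductive Der {S : finType} : rewb S -> tree S -> Prop :=
| DC a : Der (RChr a) (TC a)
| DE : Der (REps S) (TE S)
| DR i : Der (RRef S i) (TR S i)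
| DCat a b t u : Der a t -> Der b u -> Der (RCat a b) (TCat t u)
| DAl a b t : Der a t -> Der (RAlt a b) (TAl t)
| DAr a b t : Der b t -> Der (RAlt a b) (TAr t)
| DSN a : Der (RStar a) (TSN S)
| DSC a t u : Der a t -> Der (RStar a) u -> Der (RStar a) (TSC t u)
| DCap j a t : Der a t -> Der (RCap j a) (TCap j t).

Lemma Der_InR {S : finType} (b : rewb S) t : Der b t -> InR b (word t).
Proof. elim=> /=; try by constructor. all: move=> *; by constructor. Qed.

Lemma InR_Der {S : finType} (b : rewb S) v : InR b v -> exists t, Der b t /\ word t = v.
Proof.
elim.
- move=> a; exists (TC a); split=> //; constructor.
- exists (TE S); split => //; constructor.
- move=> i; exists (TR S i); split => //; constructor.
- move=> a1 a2 u w _ [t [Ht <-]] _ [t' [Ht' <-]]; exists (TCat t t'); split=> //; by constructor.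
- move=> a1 a2 u _ [t [Ht <-]]; exists (TAl t); split=> //; by constructor.
- move=> a1 a2 u _ [t [Ht <-]]; exists (TAr t); split=> //; by constructor.
- move=> a1; exists (TSN S); split => //; constructor.
- move=> a1 u w _ [t [Ht <-]] _ [t' [Ht' <-]]; exists (TSC t t'); split=> //; by constructor.
- move=> j a1 u _ [t [Ht <-]]; exists (TCap j t); split=> //; by constructor.
Qed.

Lemma gmap_word {S : finType} (t : tree S) : size (gmap (word t)) = lit t.
Proof.
elim: t => //= [t IH u IH'|t IH u IH'|j t IH]; rewrite ?gmap_cat ?size_cat ?IH ?IH' //.
by rewrite -cats1 gmap_cat cats0 IH.
Qed.

Lemma Der_OC {S : finType} (b : rewb S) t j :
  Der b t -> has (isO j) (word t) || has (isC j) (word t) -> j \in var b.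
Proof.
elim=> //=.
- move=> a c t1 u _ IH1 _ IH2; rewrite !has_cat mem_cat.
  case/orP=> /orP [] h; [rewrite IH1 // h | rewrite IH2 ?orbT // h | rewrite IH1 ?orbT // h | rewrite IH2 ?orbT //h]; by rewrite ?orbT.
- move=> a c t1 _ IH h; by rewrite mem_cat IH.
- move=> a c t1 _ IH h; by rewrite mem_cat IH ?orbT.
- move=> a t1 u _ IH1 _ IH2; rewrite !has_cat.
  case/orP=> /orP [] h; [rewrite IH1 // h | rewrite IH2 ?orbT // h | rewrite IH1 ?orbT // h | rewrite IH2 ?orbT //h]; by rewrite ?orbT.
- move=> i a t1 _ IH; rewrite in_cons -cats1 !has_cat /= !orbF.
  case/orP=> /orP [] h; first (by rewrite eq_sym h); try (by rewrite IH ?h ?orbT).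
  by rewrite eq_sym h.
Qed.

Lemma Der_capv {S : finType} (b : rewb S) t j c :
  Der b t -> capv t j = Some c -> (j \in var b) /\ c <= lit t.
Proof.
move=> H; elim: H c => //=.
- move=> a d t1 u _ IH1 _ IH2 c; rewrite mem_cat.
  case E: (capv u j) => [c'|].
    by case=> <-; case: (IH2 _ E) => -> h; rewrite orbT; split=> //; apply: leq_trans h (leq_addl _ _).
  by move=> /IH1 [-> h]; split=> //; apply: leq_trans h (leq_addr _ _).
- by move=> a d t1 _ IH c /IH [h1 h2]; rewrite mem_cat h1.
- by move=> a d t1 _ IH c /IH [h1 h2]; rewrite mem_cat h1 orbT.
- move=> a t1 u _ IH1 _ IH2 c.
  case E: (capv u j) => [c'|].
    by case=> <-; case: (IH2 _ E) => -> h; split=> //; apply: leq_trans h (leq_addl _ _).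
  by move=> /IH1 [-> h]; split=> //; apply: leq_trans h (leq_addr _ _).
- move=> i a t1 _ IH c; rewrite in_cons; case: eqP => [-> [<-]|_ /IH [-> ->]] //.
Qed.

Lemma no_captured_pure {S : finType} (b : rewb S) : has_ref b = false -> no_captured_ref b.
Proof.
elim: b => //=.
- by move=> b1 IH1 b2 IH2 /norP [/negbTE /IH1 -> /negbTE /IH2 ->].
- by move=> b1 IH1 b2 IH2 /norP [/negbTE /IH1 -> /negbTE /IH2 ->].
- by move=> j b IH ->.
Qed.

Lemma pure_out {S : finType} (b : rewb S) t e :
  Der b t -> has_ref b = false -> out t e = lit t /\ ~~ has isN (word t).
Proof.
move=> H; elim: H e => //=.
- move=> a c t1 u _ IH1 _ IH2 e /norP [/negbTE h1 /negbTE h2].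
  case: (IH1 e h1) => -> n1; case: (IH2 (env t1 e) h2) => -> n2; by rewrite has_cat negb_or n1 n2.
- by move=> a c t1 _ IH e /norP [/negbTE h1 _]; apply: IH.
- by move=> a c t1 _ IH e /norP [_ /negbTE h1]; apply: IH.
- move=> a t1 u _ IH1 _ IH2 e h.
  case: (IH1 e h) => -> n1; case: (IH2 (env t1 e) h) => -> n2; by rewrite has_cat negb_or n1 n2.
- move=> i a t1 _ IH e h; case: (IH e h) => -> h2; split=> //.
  by rewrite -cats1 has_cat /= orbF.
Qed.


Definition Rel {S : finType} (X : seq (sym S)) (e e' : nat -> nat) :=
  forall i, (fo i X = None /\ e' i = e i) \/
    (exists a u, fo i X = Some a /\ upto_close i a = Some u /\ size (gmap u) = e' i).
Definition Inv {S : finType} (pre : seq (sym S)) (e : nat -> nat) :=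
  forall i, (fo i pre = None /\ e i = 0) \/
    (exists a u, fo i pre = Some a /\ upto_close i a = Some u /\ size (gmap u) = e i).

Lemma inv_app {S : finType} (pre X : seq (sym S)) e e' :
  Inv pre e -> Rel X e e' -> Inv (pre ++ X) e'.
Proof.
move=> H1 H2 i; rewrite fo_cat.
case: (H2 i) => [[-> ->]|[a [u [-> [h1 h2]]]]]; last by right; exists a, u.
case: (H1 i) => [[-> ->]|[a [u [-> [h1 h2]]]]]; first by left.
right; exists (a ++ X), u; split=> //; split=> //; exact: uc_cat.
Qed.

Lemma rel_cat {S : finType} (X1 X2 : seq (sym S)) e e1 e2 e3 :
  Rel X1 e e1 -> Rel X2 e1 e2 -> (forall i, e3 i = e2 i) -> Rel (X1 ++ X2) e e3.
Proof.
move=> H1 H2 E i; rewrite fo_cat E.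
case: (H2 i) => [[-> ->]|[a [u [-> [h1 h2]]]]]; last by right; exists a, u.
case: (H1 i) => [[-> ->]|[a [u [-> [h1 h2]]]]]; first by left.
right; exists (a ++ X2), u; split=> //; split=> //; exact: uc_cat.
Qed.

Lemma rel_let {S : finType} (w : seq S) e : Rel (map (@SLet S) w) e e.
Proof. move=> i; left; split=> //; apply: fo_none; exact: has_let. Qed.

Lemma rel_nil {S : finType} e : Rel (@nil (sym S)) e e.
Proof. by move=> i; left. Qed.

Lemma env_cat {S : finType} (t u : tree S) e i : env (TCat t u) e i = env u (env t e) i.
Proof. rewrite /env /=; by case: (capv u i). Qed.
Lemma env_sc {S : finType} (t u : tree S) e i : env (TSC t u) e i = env u (env t e) i.
Proof. rewrite /env /=; by case: (capv u i). Qed.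

Lemma R_pure {S : finType} k (b : rewb S) t :
  Der b t -> rewb_k k b -> has_ref b = false -> forall e, Rel (word t) e (env t e).
Proof.
elim=> //=.
- by move=> a e i; left.
- by move=> e i; left.
- move=> a c t1 u _ IH1 _ IH2 /andP [k1 k2] /norP [/negbTE h1 /negbTE h2] e.
  apply: rel_cat (IH1 k1 h1 e) (IH2 k2 h2 _) _; exact: env_cat.
- by move=> a c t1 _ IH /andP [k1 _] /norP [/negbTE h1 _] e; apply: IH.
- by move=> a c t1 _ IH /andP [_ k1] /norP [_ /negbTE h1] e; apply: IH.
- by move=> a e i; left.
- move=> a t1 u Dt IH1 _ IH2 k1 h1 e.
  apply: rel_cat (IH1 k1 h1 e) (IH2 k1 h1 _) _; exact: env_sc.
- move=> j a t1 Dt IH /and3P [_ nj k1] h1 e i.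
  have nO : ~~ has (isO j) (word t1).
    apply/negP=> h; move: nj; by rewrite (Der_OC Dt) // h.
  have nC : ~~ has (isC j) (word t1).
    apply/negP=> h; move: nj; by rewrite (Der_OC Dt) // h orbT.
  case: (eqVneq i j) => [->|nij].
    right; exists (rcons (word t1) (SClose _ j)), (word t1).
    rewrite -(cat0s (SOpen _ j :: _)) fo_open; last by rewrite -cats1 has_cat /= orbF.
    split=> //; rewrite -cats1 uc_close //; split=> //.
    by rewrite gmap_word /env /= eqxx.
  have -> : fo i (SOpen _ j :: rcons (word t1) (SClose _ j)) =
            omap (fun a => a ++ [:: SClose _ j]) (fo i (word t1)).
    rewrite -cats1 -cat1s catA fo_cat.
    have -> : fo i [:: SClose _ j] = None by [].
    rewrite fo_cat; case: (fo i (word t1)) => //.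
    by rewrite /fo /= eq_sym (negbTE nij).
  have E : env (TCap j t1) e i = env t1 e i by rewrite /env /= (negbTE nij).
  case: (IH k1 h1 e i) => [[-> <-]|[a1 [u [-> [h2 h3]]]]]; first by left.
  right; exists (a1 ++ [:: SClose _ j]), u; rewrite E; split=> //; split=> //; exact: uc_cat.
Qed.

Lemma bridge {S : finType} k (b : rewb S) t :
  Der b t -> rewb_k k b -> no_captured_ref b ->
  forall pre e rest, Inv pre e ->
  exists X, deref_aux pre (word t ++ rest) = deref_aux (pre ++ X) rest /\
            size (gmap X) = out t e /\ Rel X e (env t e).
Proof.
move=> D; elim: D => //=.
- move=> a _ _ pre e rest _; exists [:: SLet a]; split; last split => //.
    by rewrite cats1.
  by move=> i; left.
- move=> _ _ pre e rest _; exists [::]; rewrite cats0; split=> //; split=> //.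
  by move=> i; left.
- move=> i _ _ pre e rest H.
  case: (H i) => [[h1 h2]|[a [u [h1 [h2 h3]]]]].
    exists [::]; move: h1; rewrite /fo => ->; rewrite cats0; split=> //; split=> //.
    by move=> j; left.
  exists (map (@SLet S) (gmap u)); move: h1 h2; rewrite /fo => -> ->; split; last split.
  - done.
  - by rewrite gmap_let.
  - exact: rel_let.
- move=> a c t1 u _ IH1 _ IH2 /andP [k1 k2] /andP [n1 n2] pre e rest H.
  case: (IH1 k1 n1 pre e (word u ++ rest) H) => X1 [E1 [S1 R1]].
  case: (IH2 k2 n2 (pre ++ X1) (env t1 e) rest (inv_app H R1)) => X2 [E2 [S2 R2]].
  exists (X1 ++ X2); rewrite -catA E1 E2 catA; split=> //; split.
    by rewrite gmap_cat size_cat S1 S2.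
  apply: rel_cat R1 R2 _; exact: env_cat.
- move=> a c t1 _ IH /andP [k1 _] /andP [n1 _] pre e rest H.
  exact: IH.
- move=> a c t1 _ IH /andP [_ k1] /andP [_ n1] pre e rest H.
  exact: IH.
- move=> a _ _ pre e rest _; exists [::]; rewrite cats0; split=> //; split=> //.
  by move=> i; left.
- move=> a t1 u _ IH1 _ IH2 k1 n1 pre e rest H.
  case: (IH1 k1 n1 pre e (word u ++ rest) H) => X1 [E1 [S1 R1]].
  case: (IH2 k1 n1 (pre ++ X1) (env t1 e) rest (inv_app H R1)) => X2 [E2 [S2 R2]].
  exists (X1 ++ X2); rewrite -catA E1 E2 catA; split=> //; split.
    by rewrite gmap_cat size_cat S1 S2.
  apply: rel_cat R1 R2 _; exact: env_sc.
- move=> j a t1 Dt _ kk /negbTE n1 pre e rest H.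
  have Dc : Der (RCap j a) (TCap j t1) by constructor.
  case: (pure_out e Dt n1) => O N.
  exists (SOpen _ j :: rcons (word t1) (SClose _ j)).
  rewrite deref_noN; last by rewrite -cats1 has_cat /= orbF.
  rewrite cat_rcons.
  split=> //; split.
    by rewrite (gmap_word (TCap j t1)) O.
  exact: (R_pure Dc kk n1 e).
Qed.

Definition e0 : nat -> nat := fun _ => 0.

Lemma lang_beta {S : finType} k (b : rewb S) w :
  rewb_k k b -> no_captured_ref b -> lang b w ->
  exists t, Der b t /\ size w = out t e0.
Proof.
move=> kb nb [v [Hv Hd]]; case: (InR_Der Hv) => t [Dt Ew]; exists t; split=> //.
have I0 : Inv (@nil (sym S)) e0 by move=> i; left.
case: (@bridge S k b t Dt kb nb [::] e0 [::] I0) => X [E [Sz _]].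
move: Hd; rewrite -Ew /deref -[word t]cats0 E /= => [[<-]]. done.
Qed.

Lemma beta_lang {S : finType} k (b : rewb S) t :
  rewb_k k b -> no_captured_ref b -> Der b t ->
  exists w, lang b w /\ size w = out t e0.
Proof.
move=> kb nb Dt.
have I0 : Inv (@nil (sym S)) e0 by move=> i; left.
case: (@bridge S k b t Dt kb nb [::] e0 [::] I0) => X [E [Sz _]].
exists (gmap X); split=> //; exists (word t); split; first exact: Der_InR.
by rewrite /deref -[word t]cats0 E.
Qed.


Definition aff (A E : nat -> nat) (m : nat) : nat -> nat := fun i => A i + m * E i.

Lemma env_ext {S : finType} (t : tree S) x y : (forall i, x i = y i) -> forall i, env t x i = env t y i.
Proof. by move=> h i; rewrite /env h. Qed.

Lemma out_ext {S : finType} (t : tree S) x y : (forall i, x i = y i) -> out t x = out t y.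
Proof.
elim: t x y => /= [a|||t IH u IH'|t IH|t IH||t IH u IH'|j t IH] x y h //; try exact: IH.
all: rewrite (IH x y h) (IH' _ (env t y)) //; exact: env_ext.
Qed.

Lemma out_mono {S : finType} (t : tree S) x y : (forall i, x i <= y i) -> out t x <= out t y.
Proof.
elim: t x y => /= [a|||t IH u IH'|t IH|t IH||t IH u IH'|j t IH] x y h //; try exact: IH.
all: apply: leq_add; first exact: IH.
all: apply: IH' => i; rewrite /env; case: (capv t i) => //=.
Qed.

Lemma lit_out {S : finType} (t : tree S) e : lit t <= out t e.
Proof.
elim: t e => /= [a|||t IH u IH'|t IH|t IH||t IH u IH'|j t IH] e //; try exact: IH.
all: by apply: leq_add.
Qed.

Definition msk {S : finType} (t : tree S) (E : nat -> nat) i := if capv t i is Some _ then 0 else E i.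

Lemma env_aff {S : finType} (t : tree S) A E m i : env t (aff A E m) i = aff (env t A) (msk t E) m i.
Proof. rewrite /env /aff /msk; case: (capv t i) => //= c; by rewrite muln0 addn0. Qed.

Lemma out_aff {S : finType} (t : tree S) : forall A E, exists c D, forall m, out t (aff A E m) = c + m * D.
Proof.
elim: t => /=.
- by move=> a A E; exists 1, 0 => m; lia.
- by move=> A E; exists 0, 0 => m; lia.
- by move=> i A E; exists (A i), (E i).
- move=> t IH u IH' A E; case: (IH A E) => c [D h]; case: (IH' (env t A) (msk t E)) => c' [D' h'].
  exists (c + c'), (D + D') => m; rewrite h (@out_ext S u (env t (aff A E m)) (aff (env t A) (msk t E) m)); last exact: env_aff.
  rewrite h'; lia.
- by move=> t IH A E; apply: IH.
- by move=> t IH A E; apply: IH.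
- by move=> A E; exists 0, 0 => m; lia.
- move=> t IH u IH' A E; case: (IH A E) => c [D h]; case: (IH' (env t A) (msk t E)) => c' [D' h'].
  exists (c + c'), (D + D') => m; rewrite h (@out_ext S u (env t (aff A E m)) (aff (env t A) (msk t E) m)); last exact: env_aff.
  rewrite h'; lia.
- by move=> j t IH A E; apply: IH.
Qed.

Definition Family {S : finType} (b : rewb S) (x : nat -> nat) :=
  exists n0 D A E, 0 < D /\ forall m, exists t, Der b t /\ out t x = n0 + m * D /\
    forall i, env t x i = aff A E m i.

Lemma fam_app {S : finType} (a b c : rewb S) (mk : tree S -> tree S -> tree S) x u :
  (forall t, Der a t -> Der c (mk t u)) ->
  (forall t y, out (mk t u) y = out t y + out u (env t y)) ->
  (forall t y i, env (mk t u) y i = env u (env t y) i) ->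
  Family a x -> Family c x.
Proof.
move=> HD Ho He [n0 [D [A [E [D0 F]]]]].
case: (out_aff u A E) => c0 [D2 h].
exists (n0 + c0), (D + D2), (env u A), (msk u E); split; first by lia.
move=> m; case: (F m) => t [Dt [Ot Et]]; exists (mk t u); split; first exact: HD.
split.
  rewrite Ho Ot (@out_ext S u (env t x) (aff A E m)) // h; lia.
move=> i; rewrite He -env_aff; exact: env_ext.
Qed.

Lemma fam_pre {S : finType} (b c : rewb S) (mk : tree S -> tree S -> tree S) x t :
  (forall u, Der b u -> Der c (mk t u)) ->
  (forall u y, out (mk t u) y = out t y + out u (env t y)) ->
  (forall u y i, env (mk t u) y i = env u (env t y) i) ->
  Family b (env t x) -> Family c x.
Proof.
move=> HD Ho He [n0 [D [A [E [D0 F]]]]].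
exists (out t x + n0), D, A, E; split=> // m.
case: (F m) => u [Du [Ou Eu]]; exists (mk t u); split; first exact: HD.
split; first by rewrite Ho Ou addnA.
by move=> i; rewrite He Eu.
Qed.

Lemma fam_catl {S : finType} (a b : rewb S) x u : Der b u -> Family a x -> Family (RCat a b) x.
Proof.
move=> Du; apply: (@fam_app S a b (RCat a b) (@TCat S) x u) => //.
- by move=> t Dt; constructor.
- move=> t y i; exact: env_cat.
Qed.

Lemma fam_catr {S : finType} (a b : rewb S) x t : Der a t -> Family b (env t x) -> Family (RCat a b) x.
Proof.
move=> Dt; apply: (@fam_pre S b (RCat a b) (@TCat S) x t) => //.
- by move=> u Du; constructor.
- move=> u y i; exact: env_cat.
Qed.

Lemma fam_starl {S : finType} (a : rewb S) x u : Der (RStar a) u -> Family a x -> Family (RStar a) x.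
Proof.
move=> Du; apply: (@fam_app S a (RStar a) (RStar a) (@TSC S) x u) => //.
- by move=> t Dt; constructor.
- move=> t y i; exact: env_sc.
Qed.

Lemma fam_starr {S : finType} (a : rewb S) x t : Der a t -> Family (RStar a) (env t x) -> Family (RStar a) x.
Proof.
move=> Dt; apply: (@fam_pre S (RStar a) (RStar a) (@TSC S) x t) => //.
- by move=> u Du; constructor.
- move=> u y i; exact: env_sc.
Qed.

Lemma fam_altl {S : finType} (a b : rewb S) x : Family a x -> Family (RAlt a b) x.
Proof.
move=> [n0 [D [A [E [D0 F]]]]]; exists n0, D, A, E; split=> // m.
case: (F m) => t [Dt h]; exists (TAl t); split=> //; by constructor.
Qed.

Lemma fam_altr {S : finType} (a b : rewb S) x : Family b x -> Family (RAlt a b) x.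
Proof.
move=> [n0 [D [A [E [D0 F]]]]]; exists n0, D, A, E; split=> // m.
case: (F m) => t [Dt h]; exists (TAr t); split=> //; by constructor.
Qed.

Lemma fam_cap {S : finType} j (a : rewb S) x : has_ref a = false -> Family a x -> Family (RCap j a) x.
Proof.
move=> hr [n0 [D [A [E [D0 F]]]]].
exists n0, D, (fun i => if i == j then n0 else A i), (fun i => if i == j then D else E i); split=> // m.
case: (F m) => t [Dt [Ot Et]]; exists (TCap j t); split; first by constructor.
split=> //= i; rewrite /env /aff /=; case: eqP => [_|_].
  by case: (pure_out x Dt hr) => <- _; rewrite Ot.
exact: (Et i).
Qed.

Lemma env_idem {S : finType} (d : tree S) x i : env d (env d x) i = env d x i.
Proof. rewrite /env; by case: (capv d i). Qed.

Lemma fam_dup {S : finType} (r : rewb S) x d s :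
  Der r d -> Der (RStar r) s -> 0 < out d (env d x) -> Family (RStar r) x.
Proof.
move=> Dd Ds D0; set y := env d x.
have Hit : forall m, Der (RStar r) (iter m (TSC d) s) /\
   out (iter m (TSC d) s) y = m * out d y + out s y /\
   forall i, env (iter m (TSC d) s) y i = env s y i.
  elim=> [|m [IH1 [IH2 IH3]]] //=; split; first by constructor.
  have E : forall i, env d y i = y i by move=> i; exact: env_idem.
  split.
    rewrite (out_ext _ E) IH2; lia.
  move=> i; rewrite env_sc -IH3; exact: env_ext.
exists (out d x + out s y), (out d y), (env s y), (fun _ => 0); split=> // m.
case: (Hit m) => [H1 [H2 H3]]; exists (TSC d (iter m (TSC d) s)); split; first by constructor.
split; first by rewrite /= H2; lia.
move=> i; rewrite env_sc H3 /aff; lia.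
Qed.


Definition Sm K (e : nat -> nat) := \sum_(i < K) e i.
Definition cnt K (e : nat -> nat) := \sum_(i < K) (0 < e i).

Lemma le_Sm K (e : nat -> nat) i : i < K -> e i <= Sm K e.
Proof. move=> h; rewrite /Sm (bigD1 (Ordinal h)) //=; exact: leq_addr. Qed.

Lemma Sm_mono K (x y : nat -> nat) : (forall i, x i <= y i) -> Sm K x <= Sm K y.
Proof. move=> h; apply: leq_sum => i _; exact: h. Qed.

Lemma cnt_mono K (x y : nat -> nat) : (forall i, x i <= y i) -> cnt K x <= cnt K y.
Proof. move=> h; apply: leq_sum => i _; have := h i; case: (x i) => [|n] //=; by case: (y i). Qed.

Lemma cnt_le K (x : nat -> nat) : cnt K x <= K.
Proof.
apply: leq_trans (_ : _ <= \sum_(i < K) 1) _; first by apply: leq_sum => i _; case: (0 < x i).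
by rewrite sum1_card card_ord.
Qed.

Lemma cnt_lt K (x y : nat -> nat) i0 : (forall i, y i <= x i) -> i0 < K -> y i0 = 0 -> 0 < x i0 ->
  cnt K y < cnt K x.
Proof.
move=> h hK y0 x0; rewrite /cnt (bigD1 (Ordinal hK)) //= [X in _ < X](bigD1 (Ordinal hK)) //= y0 x0 /=.
rewrite add1n ltnS; apply: leq_sum => i _; have := h i; case: (y i) => [|n] //=; by case: (x i).
Qed.

Lemma Sm_env {S : finType} K (b : rewb S) t e : Der b t -> Sm K (env t e) <= Sm K e + K * lit t.
Proof.
move=> Dt; apply: leq_trans (_ : _ <= \sum_(i < K) (e i + lit t)) _.
  apply: leq_sum => i _; rewrite /env; case E: (capv t i) => [c|] /=; last exact: leq_addr.
  case: (Der_capv Dt E) => _ h; apply: leq_trans h (leq_addl _ _).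
by rewrite big_split /= sum_nat_const card_ord.
Qed.

Lemma var_bound {S : finType} k (b : rewb S) i : rewb_k k b -> i \in var b -> 0 < i <= k.
Proof.
elim: b => //=.
- by move=> j h; rewrite inE => /eqP ->.
- move=> b1 IH1 b2 IH2 /andP [h1 h2]; rewrite mem_cat => /orP [] ?; [exact: IH1|exact: IH2].
- move=> b1 IH1 b2 IH2 /andP [h1 h2]; rewrite mem_cat => /orP [] ?; [exact: IH1|exact: IH2].
- move=> j b IH /and3P [h1 _ h2]; rewrite inE => /orP [/eqP -> //|]; exact: IH.
Qed.

Lemma star_case {S : finType} k (r : rewb S) Br :
  rewb_k k r ->
  (forall t, Der r t -> forall e, out t e <= Br * (1 + Sm k.+1 e) \/ Family r e) ->
  forall s, Der (RStar r) s -> forall x,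
    Family (RStar r) x \/ out s x <= Br * (1 + Sm k.+1 x) * cnt k.+1 x.
Proof.
move=> kr Hr; elim=> [a||i|t _ u _|t _|t _||d _ s' IH|j t _] Ds x; try by inversion Ds.
  by right.
have [Dd Ds'] : Der r d /\ Der (RStar r) s' by inversion Ds.
case: (Hr d Dd x) => [Bd|Fd]; last by left; exact: fam_starl Ds' Fd.
case: (posnP (out d (env d x))) => [D0|Dpos]; last by left; exact: fam_dup Dd Ds' Dpos.
have lit0 : lit d = 0 by move: (lit_out d (env d x)); rewrite D0; case: (lit d).
set y := env d x.
have le : forall i, y i <= x i.
  move=> i; rewrite /y /env; case E: (capv d i) => [c|] //=.
  by case: (Der_capv Dd E) => _; rewrite lit0 leqn0 => /eqP ->.
case: (IH Ds' y) => [F|Bs]; first by left; exact: fam_starr Dd F.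
right; rewrite /=.
have HS : Sm k.+1 y <= Sm k.+1 x by apply: Sm_mono.
have HC : cnt k.+1 y <= cnt k.+1 x by apply: cnt_mono.
have Bs' : out s' y <= Br * (1 + Sm k.+1 x) * cnt k.+1 y.
  apply: leq_trans Bs _; apply: leq_mul => //; apply: leq_mul => //; by rewrite leq_add2l.
case: (posnP (out d x)) => [O0|Opos].
  rewrite O0 add0n; apply: leq_trans Bs' _; exact: leq_mul.
have Hlt : cnt k.+1 y < cnt k.+1 x.
  case: (boolP [exists i : 'I_k.+1, (capv d i != None) && (0 < x i)]).
    case/existsP => i /andP [h1 h2]; apply: (cnt_lt le (ltn_ord i)) => //.
    rewrite /y /env; case E: (capv d i) h1 => [c|] //= _.
    by case: (Der_capv Dd E) => _; rewrite lit0 leqn0 => /eqP ->.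
  rewrite negb_exists => /forallP hn.
  have ge : forall i, x i <= y i.
    move=> i; rewrite /y /env; case E: (capv d i) => [c|] //=.
    have [_ /andP [_ hi]] := (conj I (var_bound kr (proj1 (Der_capv Dd E)))).
    have := hn (Ordinal (hi : i < k.+1)); rewrite /= E /=.
    by case: (x i).
  move: (out_mono d ge); rewrite D0 leqn0 => /eqP h; by rewrite h in Opos.
have := leq_add Bd Bs'.
move=> h; apply: leq_trans h _.
rewrite -mulnS; exact: leq_mul.
Qed.

Lemma growth {S : finType} k (b : rewb S) : rewb_k k b -> no_captured_ref b ->
  exists B, forall t, Der b t -> forall e, out t e <= B * (1 + Sm k.+1 e) \/ Family b e.
Proof.
elim: b.
- move=> a _ _; exists 1 => t Dt e; inversion Dt; subst; left => /=; lia.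
- move=> _ _; exists 0 => t Dt e; inversion Dt; subst; left => //=.
- move=> i /= /andP [i1 i2] _; exists 1 => t Dt e; inversion Dt; subst; left => /=.
  rewrite mul1n; apply: leq_trans (le_Sm e _) (leq_addl _ _); by rewrite ltnS.
- move=> b1 IH1 b2 IH2 /= /andP [k1 k2] /andP [n1 n2].
  case: (IH1 k1 n1) => B1 H1; case: (IH2 k2 n2) => B2 H2.
  exists (B1 + B2 + B2 * k.+1 * B1) => t Dt e.
  have [t1 [t2 [-> [D1 D2]]]] : exists t1 t2, t = TCat t1 t2 /\ Der b1 t1 /\ Der b2 t2.
    by inversion Dt; subst; exists t0, u.
  case: (H1 t1 D1 e) => [h1|F]; last by right; exact: fam_catl D2 F.
  case: (H2 t2 D2 (env t1 e)) => [h2|F]; last by right; exact: fam_catr D1 F.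
  left => /=.
  have h3 : Sm k.+1 (env t1 e) <= Sm k.+1 e + k.+1 * (B1 * (1 + Sm k.+1 e)).
    apply: leq_trans (Sm_env k.+1 e D1) _; rewrite leq_add2l; apply: leq_mul => //.
    exact: leq_trans (lit_out t1 e) h1.
  have h4 : B2 * (1 + Sm k.+1 (env t1 e)) <= B2 * (1 + (Sm k.+1 e + k.+1 * (B1 * (1 + Sm k.+1 e)))).
    by apply: leq_mul => //; rewrite leq_add2l.
  move: h1 h2 h3 h4; set s := Sm k.+1 e; set s' := Sm k.+1 (env t1 e); set o1 := out t1 e; set o2 := out t2 _.
  move=> h1 h2 h3 h4; nia.
- move=> b1 IH1 b2 IH2 /= /andP [k1 k2] /andP [n1 n2].
  case: (IH1 k1 n1) => B1 H1; case: (IH2 k2 n2) => B2 H2.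
  exists (B1 + B2) => t Dt e.
  have [[t1 [-> D1]]|[t1 [-> D1]]] : (exists t1, t = TAl t1 /\ Der b1 t1) \/ (exists t1, t = TAr t1 /\ Der b2 t1).
    by inversion Dt; subst; [left|right]; exists t0.
  + case: (H1 t1 D1 e) => [h1|F]; last by right; exact: fam_altl F.
    left => /=; apply: leq_trans h1 _; apply: leq_mul => //; exact: leq_addr.
  + case: (H2 t1 D1 e) => [h1|F]; last by right; exact: fam_altr F.
    left => /=; apply: leq_trans h1 _; apply: leq_mul => //; exact: leq_addl.
- move=> r IH /= kr nr; case: (IH kr nr) => Br Hr.
  exists (Br * k.+1) => t Dt e.
  case: (star_case kr Hr Dt e) => [F|h]; first by right.
  left; apply: leq_trans h _; rewrite [X in _ <= X]mulnAC; apply: leq_mul => //; exact: cnt_le.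
- move=> j a IH /= /and3P [_ _ ka] na.
  have hr : has_ref a = false by apply: negbTE.
  case: (IH ka (no_captured_pure hr)) => Ba Ha; exists Ba => t Dt e.
  have [t1 [-> D1]] : exists t1, t = TCap j t1 /\ Der a t1 by inversion Dt; subst; exists t0.
  case: (Ha t1 D1 e) => [h|F]; [by left | right; exact: fam_cap hr F].
Qed.


Definition body (S : finType) : rewb S :=
  RCat (RCap 2 (RCat (RRef S 1) (RRef S 1))) (RCap 1 (RCat (RRef S 2) (RRef S 2))).
Definition alpha {S : finType} (a0 : S) : rewb S :=
  RCat (RCap 1 (RChr a0)) (RStar (body S)).
Definition Y (S : finType) : seq (sym S) :=
  [:: SOpen S 2; SNum S 1; SNum S 1; SClose S 2; SOpen S 1; SNum S 2; SNum S 2; SClose S 1].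

Lemma fo_block {S : finType} i (p L s : seq (sym S)) :
  ~~ has (isO i) L -> ~~ has (isC i) L -> ~~ has (isO i) s ->
  fo i (p ++ SOpen S i :: L ++ SClose S i :: s) = Some (L ++ SClose S i :: s) /\
  upto_close i (L ++ SClose S i :: s) = Some L.
Proof.
move=> h1 h2 h3; split; last exact: uc_close.
apply: fo_open; rewrite has_cat negb_or h1 /=.
case: i h1 h2 h3 => [|i] h1 h2 h3 //=.
Qed.

Lemma step_noN {S : finType} (pre rest : seq (sym S)) x :
  ~~ isN x -> deref_aux pre (x :: rest) = deref_aux (pre ++ [:: x]) rest.
Proof. move=> h; rewrite -cat1s deref_noN //= orbF //. Qed.

Lemma hasL {S : finType} (w : seq S) i : ~~ has (isO i) (map (@SLet S) w) /\ ~~ has (isC i) (map (@SLet S) w).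
Proof. by split; apply: has_let. Qed.

Lemma alpha_iter {S : finType} m : forall (p : seq (sym S)) (w : seq S),
  exists w', deref_aux (p ++ SOpen S 1 :: map (@SLet S) w ++ [:: SClose S 1]) (flatten (nseq m (Y S))) = Some w' /\
    size w' + 2 * size w = size (gmap p) + size w + 2 * size w * 4 ^ m.
Proof.
elim: m => [|m IH] p w.
  exists (gmap (p ++ SOpen S 1 :: map (@SLet S) w ++ [:: SClose S 1])); split=> //.
  rewrite gmap_cat /= gmap_cat gmap_let /= cats0 size_cat; lia.
set L := map (@SLet S) w.
have [oL cL] := hasL w 1; have [oL2 cL2] := hasL w 2.
set P0 := p ++ SOpen S 1 :: L ++ [:: SClose S 1].
rewrite (_ : flatten (nseq m.+1 (Y S)) = Y S ++ flatten (nseq m (Y S))) // /Y !cat_cons cat0s.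
rewrite step_noN //.
have [f1 u1] := @fo_block S 1 p L [:: SOpen S 2] oL cL isT.
rewrite (@deref_ref S 1 _ _ (L ++ [:: SClose S 1; SOpen S 2]) L); last first.
- exact: u1.
- by rewrite /P0 -catA /= -catA /= f1.
rewrite gmap_let -/L.
have [f2 u2] := @fo_block S 1 p L (SOpen S 2 :: L) oL cL oL.
rewrite (@deref_ref S 1 _ _ (L ++ SClose S 1 :: SOpen S 2 :: L) L); last first.
- exact: u2.
- by rewrite /P0 -!catA /= -!catA /= f2.
rewrite gmap_let -/L step_noN // step_noN //.
have oLL : ~~ has (isO 2) (L ++ L) by rewrite has_cat negb_or oL2.
have cLL : ~~ has (isC 2) (L ++ L) by rewrite has_cat negb_or cL2.
have [f3 u3] := @fo_block S 2 P0 (L ++ L) [:: SOpen S 1] oLL cLL isT.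
rewrite (@deref_ref S 2 _ _ ((L ++ L) ++ [:: SClose S 2; SOpen S 1]) (L ++ L)); last first.
- exact: u3.
- by rewrite -f3 -!catA.
set M := map (@SLet S) (gmap (L ++ L)).
have oM : ~~ has (isO 2) (SOpen S 1 :: M) by rewrite /= has_let.
have [f4 u4] := @fo_block S 2 P0 (L ++ L) (SOpen S 1 :: M) oLL cLL oM.
rewrite (@deref_ref S 2 _ _ ((L ++ L) ++ SClose S 2 :: SOpen S 1 :: M) (L ++ L)); last first.
- exact: u4.
- by rewrite -f4 -!catA.
rewrite -/M step_noN //.
have hM : M = map (@SLet S) (w ++ w) by rewrite /M gmap_cat gmap_let.
case: (IH (P0 ++ SOpen S 2 :: L ++ L ++ [:: SClose S 2]) ((w ++ w) ++ (w ++ w))) => w' [E1 E2].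
exists w'; split.
  rewrite -E1 /P0 hM !map_cat -!catA /=.
  by rewrite -!catA.
move: E2; rewrite /P0 !gmap_cat /= !gmap_cat /L !gmap_let /= !size_cat expnS.
rewrite !addn0 => E2; move: (4 ^ m) E2 => q E2; nia.
Qed.

Ltac invD := repeat match goal with H : Der _ _ |- _ => inversion H; subst; clear H end.

Lemma body_word {S : finType} t : Der (body S) t -> word t = Y S.
Proof. rewrite /body => H; invD; done. Qed.

Lemma star_word {S : finType} s : Der (RStar (body S)) s -> exists m, word s = flatten (nseq m (Y S)).
Proof.
elim: s => [a||i|t _ u _|t _|t _||d _ s' IH|j t _] Ds; try by inversion Ds.
  by exists 0.
have [Dd Ds'] : Der (body S) d /\ Der (RStar (body S)) s' by inversion Ds.
case: (IH Ds') => m Em; exists m.+1; by rewrite /= Em (body_word Dd).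
Qed.

Lemma alpha_inv {S : finType} (a0 : S) v : InR (alpha a0) v ->
  exists m, v = [:: SOpen S 1; SLet a0; SClose S 1] ++ flatten (nseq m (Y S)).
Proof.
case/InR_Der => t [Dt <-].
have [t1 [t2 [-> [D1 D2]]]] : exists t1 t2, t = TCat t1 t2 /\ Der (RCap 1 (RChr a0)) t1 /\ Der (RStar (body S)) t2.
  by inversion Dt; subst; exists t0, u.
case: (star_word D2) => m Em; exists m.
have -> : t1 = TCap 1 (TC a0) by clear D2 Dt Em; invD.
by rewrite /= Em.
Qed.

Lemma alpha_in {S : finType} (a0 : S) m :
  InR (alpha a0) ([:: SOpen S 1; SLet a0; SClose S 1] ++ flatten (nseq m (Y S))).
Proof.
apply: InR_cat; first exact: (InR_cap 1 (InR_chr a0)).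
elim: m => [|m IH]; first exact: InR_star0.
rewrite (_ : flatten (nseq m.+1 (Y S)) = Y S ++ flatten (nseq m (Y S))) //.
apply: InR_starS IH.
have := InR_cat (InR_cap 2 (InR_cat (InR_ref S 1) (InR_ref S 1))) (InR_cap 1 (InR_cat (InR_ref S 2) (InR_ref S 2))).
done.
Qed.

Lemma alpha_deref {S : finType} (a0 : S) m :
  exists w, deref ([:: SOpen S 1; SLet a0; SClose S 1] ++ flatten (nseq m (Y S))) = Some w /\
    size w + 1 = 2 * 4 ^ m.
Proof.
case: (alpha_iter m [::] [:: a0]) => w [E1 E2]; exists w; split.
  by rewrite /deref deref_noN.
move: E2 => /=; lia.
Qed.

Lemma alpha_sizes {S : finType} (a0 : S) w : lang (alpha a0) w -> exists m, size w + 1 = 2 * 4 ^ m.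
Proof.
case=> v [Hv Hd]; case: (alpha_inv Hv) => m Ev; subst v.
case: (alpha_deref a0 m) => w' [E1 E2]; exists m; by move: Hd; rewrite E1 => [[<-]].
Qed.

Lemma alpha_big {S : finType} (a0 : S) B : exists w, lang (alpha a0) w /\ B < size w.
Proof.
case: (alpha_deref a0 B) => w [E1 E2]; exists w; split.
  exists ([:: SOpen S 1; SLet a0; SClose S 1] ++ flatten (nseq B (Y S))); split=> //; exact: alpha_in.
have : B < 4 ^ B by apply: ltn_expl.
lia.
Qed.


Theorem corollary3 (Sigma : finType) (a0 : Sigma) :
  exists (k : nat) (alpha : rewb Sigma),
    1 <= k /\ rewb_k k alpha /\
    forall (k' : nat) (beta : rewb Sigma),
      1 <= k' -> rewb_k k' beta -> no_captured_ref beta ->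
      ~ (forall w : seq Sigma, lang alpha w <-> lang beta w).
Proof.
exists 2, (alpha a0); split=> //; split=> //.
move=> k' beta _ kb nb Heq.
case: (growth kb nb) => B HB.
case: (alpha_big a0 B) => w [Lw Bw].
case: (lang_beta kb nb (proj1 (Heq w) Lw)) => t [Dt Sw].
case: (HB t Dt e0) => [h|F].
  move: h; rewrite /Sm big1 // addn0 muln1 -Sw => h.
  by move: (leq_ltn_trans h Bw); rewrite ltnn.
case: F => n0 [D [A [E [D0 Fm]]]].
have sz : forall m, exists a, n0 + m * D + 1 = 2 * 4 ^ a.
  move=> m; case: (Fm m) => tm [Dm [Om _]].
  case: (beta_lang kb nb Dm) => wm [Lm Sm'].
  case: (alpha_sizes (proj2 (Heq wm) Lm)) => a Ea; exists a; by rewrite -Om -Sm'.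
case: (sz 1) => a Ea; case: (sz 2) => b Eb.
case: (ltnP a b) => hab.
  have : 4 ^ a.+1 <= 4 ^ b by apply: leq_pexp2l.
  rewrite expnS; move: (4 ^ a) (4 ^ b) Ea Eb => p q Ea Eb; nia.
have : 4 ^ b <= 4 ^ a by apply: leq_pexp2l.
move: (4 ^ a) (4 ^ b) Ea Eb => p q Ea Eb; nia.
Qed.
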